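(* Let $\Delta$ be a CNF whose primal treewidth is $w$, and let $\Sigma$ be a CNF obtained by applying the BVA transformation $k$ times successively starting from $\Delta$. Then the primal treewidth of $\Sigma$ is at most $w+k$.
   Context: BVA transformation: given a CNF $\Delta$ and a fresh variable $Y$ not occurring in $\Delta$, choose a set $C_Y = \{Y \vee \alpha_1,\ldots, Y\vee \alpha_m\}$ of clauses containing literal $Y$ and a set $C_{\neg Y} = \{\neg Y \vee \beta_1,\ldots,\neg Y\vee\beta_k\}$ of clauses containing $\neg Y$ (with $\alpha_i,\beta_j$ clauses over variables of $\Delta$) such that the set of resolvents $C_Y \bowtie C_{\neg Y} = \{\alpha_i \vee \beta_j\}$ is contained in the clauses of $\Delta$ and $|C_Y \bowtie C_{\neg Y}| > |C_Y| + |C_{\neg Y}|$; the result is $\Delta$ with the clauses $C_Y \bowtie C_{\neg Y}$ removed and the clauses $C_Y \cup C_{\neg Y}$ added. Primal treewidth: a jointree for a CNF $\Delta$ is a tree whose vertices are labeled with subsets (clusters) of the variables of $\Delta$ such that (i) for each clause of $\Delta$ some cluster contains all its variables, and (ii) if a variable appears in the clusters of two vertices then it appears in every cluster on the path between them. The width of a jointree is its largest cluster size minus 1; the primal treewidth of $\Delta$ is the minimum width of a jointree for $\Delta$ (equivalently, the treewidth of the primal graph, whose vertices are the variables with an edge between two variables iff they occur together in some clause). *)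

(* Defs.v *)
From HB Require Import structures.
From mathcomp Require Import all_boot.
From mathcomp Require Import finmap.

Set Implicit Arguments.
Unset Strict Implicit.
Unset Printing Implicit Defensive.

Local Open Scope fset_scope.

(* Variables are natural numbers; a literal is a pair (x, b):
   (x, true) is the positive literal x, (x, false) is the negative literal ~x. *)
Definition var := nat.
Definition lit := (nat * bool)%type.
Definition clause := {fset lit}.
Definition cnf := {fset clause}.

Definition clause_vars (c : clause) : {fset nat} := [fset l.1 | l in c].
Definition cnf_vars (D : cnf) : {fset nat} :=
  \big[fsetU/fset0]_(c <- D) clause_vars c.

Definition add_lit (l : lit) (a : clause) : clause := l |` a.

(* One BVA step from D to S: C_Y = {Y \/ a | a in A}, C_~Y = {~Y \/ b | b in B},
   resolvents {a \/ b | a in A, b in B}. *)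
Definition resolvents (A B : {fset clause}) : {fset clause} :=
  [fset a `|` b | a in A, b in B].
Definition pos_clauses (Y : nat) (A : {fset clause}) : {fset clause} :=
  [fset add_lit (Y, true) a | a in A].
Definition neg_clauses (Y : nat) (B : {fset clause}) : {fset clause} :=
  [fset add_lit (Y, false) b | b in B].

Definition bva_step (D S : cnf) : Prop :=
  exists (Y : nat) (A B : {fset clause}),
    [/\ Y \notin cnf_vars D,
        (forall a, a \in A -> clause_vars a `<=` cnf_vars D),
        (forall b, b \in B -> clause_vars b `<=` cnf_vars D),
        resolvents A B `<=` D &
        #|` resolvents A B | > #|` pos_clauses Y A | + #|` neg_clauses Y B |] /\
    S = (D `\` resolvents A B) `|` pos_clauses Y A `|` neg_clauses Y B.

Fixpoint bva_steps (k : nat) (D S : cnf) : Prop :=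
  match k with
  | 0 => S = D
  | k'.+1 => exists D', bva_step D D' /\ bva_steps k' D' S
  end.

Definition is_tree (V : finType) (e : rel V) : Prop :=
  [/\ 0 < #|V|, symmetric e, irreflexive e,
      (forall u v, connect e u v) &
      (forall c : seq V, uniq c -> 2 < size c -> ~~ cycle e c)].

Definition simple_path (V : finType) (e : rel V) (u v : V) (p : seq V) : bool :=
  [&& path e u p, last u p == v & uniq (u :: p)].

Definition is_jointree (D : cnf) (V : finType) (e : rel V) (cl : V -> {fset nat}) : Prop :=
  [/\ is_tree e,
      (forall v, cl v `<=` cnf_vars D),
      (forall c, c \in D -> exists v, clause_vars c `<=` cl v) &
      (forall x u v p, x \in cl u -> x \in cl v -> simple_path e u v p ->
                       all (fun w => x \in cl w) p)].

Definition jt_width (V : finType) (cl : V -> {fset nat}) : nat :=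
  (\max_(v : V) #|` cl v |) - 1.

Definition has_jointree_of_width (D : cnf) (w : nat) : Prop :=
  exists (V : finType) (e : rel V) (cl : V -> {fset nat}),
    is_jointree D e cl /\ jt_width cl = w.

Lemma has_jointree_exists (D : cnf) : exists w, has_jointree_of_width D w.
Proof.
exists (jt_width (fun _ : unit => cnf_vars D)).
exists unit, (fun _ _ => false), (fun _ => cnf_vars D); split; last by [].
split.
- split.
  + by rewrite card_unit.
  + by move=> [] [].
  + by move=> [].
  + by move=> [] [].
  + move=> c Uc Sc.
    have H1 : #|[pred x in c]| <= #|{: unit}| by apply: max_card.
    move: H1; rewrite card_unit (card_uniqP Uc) => H1.
    by move: (leq_trans Sc H1).
- by [].
- move=> c cD; exists tt.
  rewrite /cnf_vars (big_rem c) //=; exact: fsubsetUl.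
- move=> x u v p _ xD _; apply/allP => w _; exact: xD.
Qed.

(* [is_primal_treewidth D w]: w is the primal treewidth of D, i.e. the
   minimum width of a jointree for D (such a minimum always exists, since
   jointrees exist by [has_jointree_exists] and widths are natural numbers). *)
Definition is_primal_treewidth (D : cnf) (w : nat) : Prop :=
  has_jointree_of_width D w /\
  (forall w', has_jointree_of_width D w' -> w <= w').

(* Main.v *)
Require Import Defs.
From Stdlib Require Import Classical.
From HB Require Import structures.
From mathcomp Require Import all_boot.
From mathcomp Require Import finmap.
From mathcomp Require Import zify.

Local Open Scope fset_scope.

Lemma cnf_varsP (D : cnf) x :
  reflect (exists2 c, c \in D & x \in clause_vars c) (x \in cnf_vars D).
Proof.
rewrite /cnf_vars; apply: (iffP (bigfcupP _ _ _ xpredT)).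
- by move=> [c /andP[cD _] xc]; exists c.
- by move=> [c cD xc]; exists c; rewrite ?cD.
Qed.

Lemma clause_varsU x (a b : clause) :
  x \in clause_vars (a `|` b) -> x \in clause_vars a \/ x \in clause_vars b.
Proof.
move/imfsetP=> [l /= /fsetUP [la|lb] ->].
- by left; apply/imfsetP; exists l.
- by right; apply/imfsetP; exists l.
Qed.

Lemma clause_vars_add l (a : clause) x :
  x \in clause_vars a -> x \in clause_vars (add_lit l a).
Proof.
move/imfsetP=> [l' /= la ->]; apply/imfsetP; exists l' => //=.
by rewrite /add_lit in_fset1U la orbT.
Qed.

Lemma clause_vars_add_self (l : lit) (a : clause) :
  l.1 \in clause_vars (add_lit l a).
Proof. by apply/imfsetP; exists l => //=; rewrite /add_lit in_fset1U eqxx. Qed.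

Lemma clause_vars_sub (a b : clause) :
  a `<=` b -> clause_vars a `<=` clause_vars b.
Proof.
move=> /fsubsetP ab; apply/fsubsetP => x /imfsetP [l /= la ->].
by apply/imfsetP; exists l => //=; apply: ab.
Qed.

Lemma step_jt (D E : cnf) w :
  has_jointree_of_width D w -> bva_step D E ->
  exists w', w' <= w.+1 /\ has_jointree_of_width E w'.
Proof.
move=> [V [e [cl [[Htree Hsub Hcov Hrip] Hw]]]].
move=> [Y [A [B [[YD HA HB HR Hcard] ->]]]].
set D' := _ `|` _ `|` _.
have [A0|[a0 a0A]] := fset_0Vmem A.
  by move: Hcard; rewrite A0 /resolvents; rewrite (_ : [fset _ | _ in fset0, _ in B] = fset0) ?cardfs0 //;
     apply/fsetP => z; rewrite in_fset0; apply/negbTE/negP => /imfset2P [a]; rewrite in_fset0.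
have [B0|[b0 b0B]] := fset_0Vmem B.
  by move: Hcard; rewrite B0 /resolvents; rewrite (_ : [fset _ | _ in A, _ in fset0] = fset0) ?cardfs0 //;
     apply/fsetP => z; rewrite in_fset0; apply/negbTE/negP => /imfset2P [a _ [b]]; rewrite in_fset0.
have inres a b : a \in A -> b \in B -> a `|` b \in resolvents A B.
  by move=> aA bB; apply/imfset2P; exists a => //; exists b.
have posD a : a \in A -> add_lit (Y, true) a \in D'.
  by move=> aA; rewrite !in_fsetU; apply/orP; left; apply/orP; right; apply/imfsetP; exists a.
have negD b : b \in B -> add_lit (Y, false) b \in D'.
  by move=> bB; rewrite !in_fsetU; apply/orP; right; apply/imfsetP; exists b.
have YD' : Y \in cnf_vars D'.
  by apply/cnf_varsP; exists (add_lit (Y, true) a0); [exact: posD | exact: (clause_vars_add_self (Y,true))].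
have DD' : cnf_vars D `<=` cnf_vars D'.
  apply/fsubsetP => x /cnf_varsP [c cD xc].
  case cR: (c \in resolvents A B).
    move: cR => /imfset2P [a aA [b bB ceq]]; subst c.
    case: (clause_varsU _ _ _ xc) => xv.
      by apply/cnf_varsP; exists (add_lit (Y, true) a); [exact: posD|exact: clause_vars_add].
    by apply/cnf_varsP; exists (add_lit (Y, false) b); [exact: negD|exact: clause_vars_add].
  apply/cnf_varsP; exists c => //.
  by rewrite !in_fsetU in_fsetD cR cD.
exists (jt_width (fun v => Y |` cl v)); split.
  rewrite -Hw /jt_width.
  have : \max_(v : V) #|` Y |` cl v| <= (\max_(v : V) #|` cl v|).+1.
    apply/bigmax_leqP => v _; rewrite cardfsU1.
    have := @leq_bigmax _ (fun v => #|` cl v|) v.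
    by case: (Y \notin cl v) => /=; rewrite ?add1n ?add0n // => h; apply: leq_trans h _.
  move: (\max_(v : V) _) (\max_(v : V) _) => m n h; lia.
exists V, e, (fun v => Y |` cl v); split => //.
split => //.
- move=> v; apply/fsubsetP => x /fset1UP [->//|xv].
  by apply: (fsubsetP DD'); apply: (fsubsetP (Hsub v)).
- move=> c; rewrite !in_fsetU => /orP [/orP [|]|].
  + rewrite in_fsetD => /andP [_ cD]; have [v hv] := Hcov c cD.
    by exists v; apply: fsubset_trans hv _; apply: fsubsetU1.
  + move=> /imfsetP [a aA ->] /=.
    have [v hv] := Hcov _ (fsubsetP HR _ (inres a b0 aA b0B)).
    exists v; apply/fsubsetP => x /imfsetP [l /= /fset1UP [->|la] ->]; first by rewrite in_fset1U eqxx.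
    rewrite in_fset1U; apply/orP; right; apply: (fsubsetP hv).
    by apply/imfsetP; exists l => //=; rewrite in_fsetU la.
  + move=> /imfsetP [b bB ->] /=.
    have [v hv] := Hcov _ (fsubsetP HR _ (inres a0 b a0A bB)).
    exists v; apply/fsubsetP => x /imfsetP [l /= /fset1UP [->|lb] ->]; first by rewrite in_fset1U eqxx.
    rewrite in_fset1U; apply/orP; right; apply: (fsubsetP hv).
    by apply/imfsetP; exists l => //=; rewrite in_fsetU lb orbT.
- move=> x u v p /fset1UP [->|xu] xv sp.
    by apply/allP => z _; rewrite in_fset1U eqxx.
  move: xv => /fset1UP [xY|xv].
    by apply/allP => z _; rewrite in_fset1U xY eqxx.
  have := Hrip x u v p xu xv sp; apply: sub_all => z /= xz.
  by rewrite in_fset1U xz orbT.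
Qed.

Lemma steps_jt k (D S : cnf) w :
  has_jointree_of_width D w -> bva_steps k D S ->
  exists w', w' <= w + k /\ has_jointree_of_width S w'.
Proof.
elim: k D w => [|k IH] D w Hj /=.
  by move=> ->; exists w; rewrite addn0.
move=> [D' [st sts]].
have [w1 [le1 Hj1]] := step_jt _ _ _ Hj st.
have [w2 [le2 Hj2]] := IH _ _ Hj1 sts.
by exists w2; split => //; apply: leq_trans le2 _; rewrite addnS -addSn leq_add2r.
Qed.

Lemma min_ex (P : nat -> Prop) n : P n ->
  exists m, [/\ P m, m <= n & forall k, P k -> m <= k].
Proof.
elim/ltn_ind: n => n IH Pn.
case: (classic (exists k, k < n /\ P k)) => [[k [kn Pk]]|H].
  have [m [Pm mk Hm]] := IH k kn Pk.
  by exists m; split => //; apply: leq_trans mk (ltnW kn).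
exists n; split => // k Pk; rewrite leqNgt; apply/negP => kn; apply: H; by exists k.
Qed.

Theorem theorem4 (D S : cnf) (w k : nat) :
  is_primal_treewidth D w -> bva_steps k D S ->
  exists w', is_primal_treewidth S w' /\ w' <= w + k.
Proof.
move=> [Hj _] Hs.
have [w2 [le2 Hj2]] := steps_jt _ _ _ _ Hj Hs.
have [m [Pm mw Hm]] := min_ex (has_jointree_of_width S) _ Hj2.
exists m; split; first by split.
exact: leq_trans le2.
Qed.
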